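(* Let $P$ be a causal stable system on $\mathcal{L}_{2e+}^n$ and let $\nu_k,\rho_k>0$ with $\nu_k\rho_k\le1/4$ for $k=1,2,\dots$. Suppose that for every sequence $(\tau_k)_{k\ge1}$ with $\tau_k\ge0$ and $\sum_{k=1}^\infty\tau_k=1$, $$\langle u,Pu\rangle\ge\Big(\sum_{k=1}^\infty\tau_k\nu_k\Big)\|u\|_2^2+\Big(\sum_{k=1}^\infty\tau_k\rho_k\Big)\|Pu\|_2^2\quad\forall u\in\mathcal{L}_{2+}.$$ Then $\theta(P)\le\arccos\big(2\sqrt{\sup_k\nu_k\rho_k}\big)$.
   Context: For $n\ge1$, $\mathcal{L}_2^n$ is the set of measurable $u:\mathbb{R}\to\mathbb{R}^n$ with $\|u\|_2^2=\int|u(t)|^2dt<\infty$, inner product $\langle u,v\rangle=\int u(t)^Tv(t)\,dt$; $\mathcal{L}_{2+}=\{u\in\mathcal{L}_2:u(t)=0\ \text{for}\ t<0\}$. For $T\ge0$, $(\Gamma_Tu)(t)=u(t)$ for $t\le T$, $0$ for $t>T$; $\mathcal{L}_{2e+}=\{u:\Gamma_Tu\in\mathcal{L}_{2+}\ \forall T\ge0\}$. A system is an operator $P:\mathcal{L}_{2e+}\to\mathcal{L}_{2e+}$ with $P0=0$, $P\ne0$; causal if $\Gamma_TP=\Gamma_TP\Gamma_T$ for all $T\ge0$; a causal system is stable if $Pu\in\mathcal{L}_{2+}$ for all $u\in\mathcal{L}_{2+}$ and $\sup_{0\ne u\in\mathcal{L}_{2+}}\|Pu\|_2/\|u\|_2<\infty$.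 The singular angle $\theta(P)\in[0,\pi]$ is given by $\cos\theta(P)=\inf\{\langle u,Pu\rangle/(\|u\|_2\|Pu\|_2):0\neq u\in\mathcal{L}_{2+},\ Pu\ne0\}$. *)

(* Defs.v *)
From HB Require Import structures.
From mathcomp Require Import all_boot all_order all_algebra.
From mathcomp Require Import all_classical all_reals all_analysis.
Set Implicit Arguments. Unset Strict Implicit. Unset Printing Implicit Defensive.
Import Order.TTheory GRing.Theory Num.Theory.
Import numFieldNormedType.Exports.
Local Open Scope classical_set_scope.
Local Open Scope ring_scope.

Section Defs.
Variables (R : realType) (n : nat).

Definition signal := R -> 'rV[R]_n.

Definition mu := (@lebesgue_measure R).

Definition vdot (x y : 'rV[R]_n) : R := \sum_(i < n) x ord0 i * y ord0 i.
Definition vsqnorm (x : 'rV[R]_n) : R := vdot x x.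

(* equality almost everywhere (elements of L2 are classes of functions) *)
Definition ae_eq (f g : signal) : Prop := mu.-negligible [set t | f t != g t].

Definition L2 (u : signal) : Prop :=
  (forall i : 'I_n, measurable_fun setT (fun t => u t ord0 i)) /\
  (\int[mu]_t (vsqnorm (u t))%:E < +oo)%E.

Definition L2p (u : signal) : Prop :=
  L2 u /\ mu.-negligible [set t | t < 0 /\ u t != 0].

Definition ip (u v : signal) : R := \int[mu]_(t in setT) vdot (u t) (v t).
Definition norm2 (u : signal) : R := Num.sqrt (\int[mu]_(t in setT) vsqnorm (u t)).

Definition trunc (T : R) (u : signal) : signal :=
  fun t => if t <= T then u t else 0.

Definition L2ep (u : signal) : Prop := forall T, 0 <= T -> L2p (trunc T u).

Definition is_system (P : signal -> signal) : Prop :=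
  [/\ forall u, L2ep u -> L2ep (P u),
      forall u v, L2ep u -> ae_eq u v -> ae_eq (P u) (P v),
      ae_eq (P (fun _ => 0)) (fun _ => 0) &
      exists u, L2ep u /\ ~ ae_eq (P u) (fun _ => 0)].

Definition causal (P : signal -> signal) : Prop :=
  is_system P /\
  forall u, L2ep u -> forall T, 0 <= T ->
    ae_eq (trunc T (P u)) (trunc T (P (trunc T u))).

Definition stable (P : signal -> signal) : Prop :=
  causal P /\ (forall u, L2p u -> L2p (P u)) /\
  exists c : R, forall u, L2p u -> norm2 u != 0 -> norm2 (P u) / norm2 u <= c.

Definition cos_singular_angle (P : signal -> signal) : R :=
  inf [set ip u (P u) / (norm2 u * norm2 (P u)) |
       u in [set u | L2p u /\ norm2 u != 0 /\ norm2 (P u) != 0]].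

Definition singular_angle (P : signal -> signal) : R := acos (cos_singular_angle P).

End Defs.

(* Main.v *)
Require Import Defs.
From HB Require Import structures.
From mathcomp Require Import all_boot all_order all_algebra.
From mathcomp Require Import all_classical all_reals all_analysis.
From mathcomp Require Import lra.
Import Order.TTheory GRing.Theory Num.Theory.
Import numFieldNormedType.Exports.
Local Open Scope classical_set_scope.
Local Open Scope ring_scope.

Lemma vsqnorm_ge0 (R : realType) n (x : 'rV[R]_n) : 0 <= vsqnorm x.
Proof. by apply: sumr_ge0 => i _; rewrite -expr2 sqr_ge0. Qed.

Lemma vsqnorm_eq0 (R : realType) n (x : 'rV[R]_n) : vsqnorm x = 0 -> x = 0.
Proof.
move=> h; apply/rowP => i; rewrite mxE.
have H : x ord0 i * x ord0 i = 0.
  apply: (@psumr_eq0P _ _ xpredT (fun i => x ord0 i * x ord0 i)) => //.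
  by move=> j _; rewrite -expr2 sqr_ge0.
by move/eqP: H; rewrite mulf_eq0 orbb => /eqP.
Qed.

Lemma meas_vsqnorm (R : realType) n (u : signal R n) :
  (forall i : 'I_n, measurable_fun setT (fun t => u t ord0 i)) ->
  measurable_fun setT (fun t => vsqnorm (u t)).
Proof.
move=> mu_; rewrite /vsqnorm /vdot.
apply: measurable_sum => i.
exact: measurable_realfun.measurable_funM.
Qed.

Lemma norm2_eq0 {R : realType} {n} {u : signal R n} :
  L2 u -> norm2 u = 0 -> Defs.ae_eq u (fun _ => 0).
Proof.
move=> [mu_ fin] /eqP; rewrite sqrtr_eq0 => hle.
have mg := @meas_vsqnorm _ _ u mu_.
have ge0 : (0 <= \int[@mu R]_t (vsqnorm (u t))%:E)%E.
  by apply: integral_ge0 => t _; rewrite lee_fin vsqnorm_ge0.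
have I0 : (\int[@mu R]_t (vsqnorm (u t))%:E)%E = 0%E.
  move: hle fin ge0; rewrite /Rintegral.
  case: (\int[@mu R]_t (vsqnorm (u t))%:E)%E => // r /= rle _; rewrite lee_fin => rge.
  by congr (_%:E); apply/eqP; rewrite eq_le rle rge.
have : (\int[@mu R]_(t in setT) `|(vsqnorm (u t))%:E|)%E = 0%R.
  rewrite -I0; apply: eq_integral => t _.
  by rewrite gee0_abs // lee_fin vsqnorm_ge0.
move/ae_eq_integral_abs => /(_ measurableT) [].
  by apply/measurable_realfun.measurable_EFinP.
move=> N [mN N0 sub]; exists N; split => // t /= ut0.
apply: sub => /= /(_ I) [] /vsqnorm_eq0 h.
by move/eqP: ut0; apply.
Qed.

Lemma ae_eq_sym (R : realType) n (f g : signal R n) : Defs.ae_eq f g -> Defs.ae_eq g f.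
Proof. by apply: negligibleS => t /=; rewrite eq_sym. Qed.

Lemma ae_eq_trans (R : realType) n (f g h : signal R n) :
  Defs.ae_eq f g -> Defs.ae_eq g h -> Defs.ae_eq f h.
Proof.
move=> fg gh; apply: (negligibleS _ (negligibleU fg gh)) => t /= fh.
case: (eqVneq (f t) (g t)) => [e|]; last by left.
by right; rewrite -e.
Qed.

Lemma L2p0 (R : realType) n : L2p (fun _ : R => (0 : 'rV[R]_n)).
Proof.
split; last first.
  by apply: negligibleS (negligible_set0 _) => t /= [_]; rewrite eqxx.
split.
  by move=> i; rewrite /=; apply: measurable_cst.
rewrite (_ : (fun t => _) = fun _ => 0%E); first by rewrite integral0 ltry.
by apply/funext => t; rewrite /vsqnorm /vdot big1 // => i _; rewrite mxE mulr0.
Qed.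

Lemma L2ep0 (R : realType) n : L2ep (fun _ : R => (0 : 'rV[R]_n)).
Proof.
move=> T _; rewrite (_ : trunc _ _ = fun _ => 0); first exact: L2p0.
by apply/funext => t; rewrite /trunc; case: ifP.
Qed.

Lemma trunc_ae0 (R : realType) n T (g : signal R n) :
  Defs.ae_eq g (fun _ => 0) -> Defs.ae_eq (trunc T g) (fun _ => 0).
Proof.
by apply: negligibleS => t /=; rewrite /trunc; case: ifP => //; rewrite eqxx.
Qed.

Lemma nonempty_set (R : realType) n (P : signal R n -> signal R n) :
  stable P -> exists u, L2p u /\ norm2 u != 0 /\ norm2 (P u) != 0.
Proof.
case=> [[[Hsys Hwd HP0 [u0 [Lu0 Nu0]]] Hcaus] [HL2 _]].
apply: contrapT => H.
have key : forall u, L2p u -> Defs.ae_eq (P u) (fun _ => 0).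
  move=> u Lu.
  case: (eqVneq (norm2 (P u)) 0) => [e|ne]; first exact: (norm2_eq0 (HL2 _ Lu).1 e).
  case: (eqVneq (norm2 u) 0) => [e|ne2]; last by exfalso; apply: H; exists u.
  have ue := @norm2_eq0 _ _ u Lu.1 e.
  apply: ae_eq_trans HP0.
  apply: ae_eq_sym; apply: Hwd; first exact: L2ep0.
  exact: ae_eq_sym.
apply: Nu0.
have hN : forall N : nat, Defs.ae_eq (trunc N%:R (P u0)) (fun _ => 0).
  move=> N.
  apply: ae_eq_trans (Hcaus u0 Lu0 N%:R (ler0n _ _)) _.
  apply: trunc_ae0; apply: key; apply: Lu0; exact: ler0n.
have hneg := (Hsys u0 Lu0 0 (lexx _)).2.
apply: (negligibleS _ (negligibleU hneg (negligible_bigcup hN))) => t /= Pt.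
have [tlt0|tge0] := ltP t 0.
  by left; split => //; rewrite /trunc ltW.
right; exists (Num.truncn t).+1 => //=.
by rewrite /trunc ltW // truncnS_gt.
Qed.

Lemma series_delta (R : realType) (g : nat -> R) k :
  series (fun j => (j == k)%:R * g j) @ \oo --> g k.
Proof.
apply: cvg_near_cst.
have E : forall N, series (fun j => (j == k)%:R * g j) N = (k < N)%:R * g k.
  elim=> [|N IH]; first by rewrite /series /= big_geq // mul0r.
  rewrite /series /= big_nat_recr //=; rewrite /series /= in IH; rewrite IH.
  case: (ltngtP k N) => [kN|Nk|->]; rewrite ?eqxx ?(gtn_eqF kN) ?(ltn_eqF Nk) /=.
  - by rewrite ltnS ltnW // mul0r addr0.
  - by rewrite ltnS leqNgt Nk /= !mul0r addr0.
  - by rewrite ltnSn mul0r add0r.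
near=> N; rewrite E.
suff -> : (k < N)%N by rewrite mul1r.
near: N; exists k.+1 => //.
Unshelve. all: by end_near.
Qed.

Lemma acos_gt1 (R : realType) (x : R) : 1 < x -> acos x = 0.
Proof.
move=> x1; rewrite unlock /acos; case: xgetP => //= y _ [_ cy].
by move: (cos_le1 y); rewrite cy leNgt x1.
Qed.


Theorem proposition4 (R : realType) (n : nat) (P : signal R n -> signal R n)
  (nu rho : nat -> R) :
  (0 < n)%N ->
  stable P ->
  (forall k, 0 < nu k) -> (forall k, 0 < rho k) ->
  (forall k, nu k * rho k <= 1 / 4) ->
  (forall (tau : nat -> R) (a b : R),
      (forall k, 0 <= tau k) ->
      series tau @ \oo --> (1 : R) ->
      series (fun k => tau k * nu k) @ \oo --> (a : R) ->
      series (fun k => tau k * rho k) @ \oo --> (b : R) ->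
      forall u, L2p u ->
        a * norm2 u ^+ 2 + b * norm2 (P u) ^+ 2 <= ip u (P u)) ->
  singular_angle P <= acos (2 * Num.sqrt (sup (range (fun k => nu k * rho k)))).
Proof.
move=> _ stP nu0 rho0 nr4 Hyp.
have hk : forall k u, L2p u ->
    nu k * norm2 u ^+ 2 + rho k * norm2 (P u) ^+ 2 <= ip u (P u).
  move=> k u Lu; apply: (Hyp (fun j => (j == k)%:R)) => //.
  - have := @series_delta R (fun _ => (1 : R)) k.
    by rewrite (_ : (fun j => _) = (fun j => (j == k)%:R)) //; apply/funext => j; rewrite mulr1.
  - exact: series_delta.
  - exact: series_delta.
pose S := [set ip u (P u) / (norm2 u * norm2 (P u)) |
       u in [set u | L2p u /\ norm2 u != 0 /\ norm2 (P u) != 0]].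
have S0 : S !=set0.
  have [u [Lu [nu_ npu]]] := @nonempty_set _ _ P stP.
  by exists (ip u (P u) / (norm2 u * norm2 (P u))), u.
have lbS : forall k, lbound S (2 * Num.sqrt (nu k * rho k)).
  move=> k _ [u [Lu [nu_ npu]] <-].
  have a0 : 0 < norm2 u by rewrite lt0r nu_ sqrtr_ge0.
  have b0 : 0 < norm2 (P u) by rewrite lt0r npu sqrtr_ge0.
  rewrite ler_pdivlMr ?mulr_gt0 //.
  apply: (le_trans _ (hk k u Lu)).
  rewrite sqrtrM; last exact: ltW.
  set p := Num.sqrt (nu k); set q := Num.sqrt (rho k).
  have -> : nu k = p ^+ 2 by rewrite sqr_sqrtr // ltW.
  have -> : rho k = q ^+ 2 by rewrite sqr_sqrtr // ltW.
  set a := norm2 u; set b := norm2 (P u).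
  have : 0 <= (p * a - q * b) ^+ 2 by apply: sqr_ge0.
  move=> h; nra.
pose c := inf S.
have hc : forall k, 2 * Num.sqrt (nu k * rho k) <= c.
  by move=> k; apply: lb_le_inf => //; exact: lbS.
have c0 : 0 <= c by apply: le_trans (hc 0%N); rewrite mulr_ge0 ?sqrtr_ge0.
set s := sup _.
have hsup : has_sup (range (fun k => nu k * rho k)).
  split; first by exists (nu 0%N * rho 0%N), 0%N.
  by exists (1/4) => _ [k _ <-].
have s0 : 0 <= s.
  apply: le_trans (sup_upper_bound hsup _); last by exists 0%N.
  by rewrite mulr_ge0 ?ltW.
have s4 : s <= 1/4 by apply: ge_sup; [case: hsup|move=> _ [k _ <-]].
have sc : s <= c ^+ 2 / 4.
  apply: ge_sup; first by case: hsup.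
  move=> _ [k _ <-].
  have := hc k; set r := Num.sqrt _ => hr.
  have r0 : 0 <= r by exact: sqrtr_ge0.
  have : r ^+ 2 = nu k * rho k by rewrite sqr_sqrtr // mulr_ge0 ?ltW.
  move=> <-; nra.
set d := 2 * Num.sqrt s.
have d0 : 0 <= d by rewrite mulr_ge0 ?sqrtr_ge0.
have hd2 : d ^+ 2 = 4 * s.
  by rewrite /d exprMn sqr_sqrtr // expr2 -natrM.
have d1 : d <= 1 by nra.
have dc : d <= c by nra.
rewrite /singular_angle (_ : cos_singular_angle P = c) // -/d.
have [c1|c1] := leP c 1; last by rewrite acos_gt1 // acos_ge0 // d1 andbT (le_trans _ d0).
have cin : -1 <= c <= 1 by rewrite c1 andbT (le_trans _ c0).
have din : -1 <= d <= 1 by rewrite d1 andbT (le_trans _ d0).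
rewrite leNgt; apply/negP => H.
have : cos (acos c) < cos (acos d).
  rewrite ltr_cos //.
  - by rewrite in_itv /= acos_ge0 ?acos_lepi.
  - by rewrite in_itv /= acos_ge0 ?acos_lepi.
rewrite !acosK ?in_itv //.
by rewrite ltNge dc.
Qed.
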